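(* Let $\mu_1,\dots,\mu_{n_{\mathcal Q}}\in[-1,1]$ be distinct quadrature nodes including $\mu=0$, and let $\mathbf m_1(\mu)=(\mu,\mu^2,\dots,\mu^N)^T$. Let $A_\pm,b_\pm$ be half-space representations $$\operatorname{co}\{\mathbf m_1(\mu_i)\}_{\mu_i\ge0}=\{\mathbf u_{1+}:A_+\mathbf u_{1+}\le b_+\},\qquad \operatorname{co}\{\mathbf m_1(\mu_i)\}_{\mu_i\le0}=\{\mathbf u_{1-}:A_-\mathbf u_{1-}\le b_-\},$$ with rows $\mathbf a_{\pm i}^T$ of $A_\pm$, and assume $b_\pm\ge0$ componentwise. Then the closure of the normalized numerically realizable set for the mixed-moment basis, $$\overline{\mathcal R}^{\mathrm{mix}}|_{u_0=1}:=\operatorname{co}\Big(\{(\mathbf m_1(\mu_i),0):\mu_i\ge0\}\cup\{(0,\mathbf m_1(\mu_i)):\mu_i\le0\}\Big)\subset\mathbb R^{2N},$$ equals $\{\mathbf u_1=(\mathbf u_{1+},\mathbf u_{1-}):A\mathbf u_1\le b\}$, where the inequalities are: $A_+\mathbf u_{1+}\le b_+$; $A_-\mathbf u_{1-}\le b_-$; and, for every pair $(i,j)$ with $b_{+i}\neq0$ and $b_{-j}\neq0$, $b_{+i}^{-1}\mathbf a_{+i}^T\mathbf u_{1+}+b_{-j}^{-1}\mathbf a_{-j}^T\mathbf u_{1-}\le1$.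
   Context: The mixed-moment basis is $(1,\mu_+,\mu_-,\dots,\mu_+^N,\mu_-^N)^T$ with $\mu_+=\max(\mu,0)$, $\mu_-=\min(\mu,0)$; after dropping the constant component and ordering the remaining components as $(\mathbf u_{1+},\mathbf u_{1-})$ (positive-half moments, then negative-half moments), the basis evaluated at a node $\mu_i\ge0$ is $(\mathbf m_1(\mu_i),0)$ and at $\mu_i\le0$ is $(0,\mathbf m_1(\mu_i))$. $\operatorname{co}$ denotes convex hull; vector inequalities are componentwise. *)

(* Defs.v *)
From HB Require Import structures.
From mathcomp Require Import all_boot all_order all_algebra.
Set Implicit Arguments. Unset Strict Implicit. Unset Printing Implicit Defensive.
Import Order.TTheory GRing.Theory Num.Theory.
Local Open Scope ring_scope.

Definition in_conv (R : realFieldType) (d : nat) (I : finType) (P : pred I)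
  (f : I -> 'cV[R]_d) (x : 'cV[R]_d) : Prop :=
  exists w : I -> R,
    (forall i, P i -> 0 <= w i) /\
    \sum_(i | P i) w i = 1 /\
    x = \sum_(i | P i) w i *: f i.

Definition m1 (R : realFieldType) (N : nat) (mu : R) : 'cV[R]_N :=
  \col_(k < N) mu ^+ k.+1.

Definition mx_le (R : realFieldType) (p N : nat) (A : 'M[R]_(p, N))
  (u : 'cV[R]_N) (b : 'cV[R]_p) : Prop :=
  forall i : 'I_p, (A *m u) i 0 <= b i 0.

(* Index set of the generating points of the mixed-moment realizable set:
   inl i  ~ (m_1(mu_i), 0) for mu_i >= 0 ;  inr i ~ (0, m_1(mu_i)) for mu_i <= 0. *)
Definition mix_sel (R : realFieldType) (n : nat) (mu : 'I_n -> R)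
  (k : 'I_n + 'I_n) : bool :=
  match k with inl i => 0 <= mu i | inr i => mu i <= 0 end.

Definition mix_pt (R : realFieldType) (n N : nat) (mu : 'I_n -> R)
  (k : 'I_n + 'I_n) : 'cV[R]_(N + N) :=
  match k with
  | inl i => col_mx (m1 N (mu i)) 0
  | inr i => col_mx 0 (m1 N (mu i))
  end.

Definition Rmix_closed (R : realFieldType) (n N : nat) (mu : 'I_n -> R)
  (u : 'cV[R]_(N + N)) : Prop :=
  in_conv (mix_sel mu) (mix_pt N mu) u.

(* Main.v *)
Require Import Defs.
From HB Require Import structures.
From mathcomp Require Import all_boot all_order all_algebra lra.
Import Order.TTheory GRing.Theory Num.Theory.
Local Open Scope ring_scope.

Lemma conv_bound (R : realFieldType) (n N : nat) (S : pred 'I_n) (mu : 'I_n -> R) :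
  (forall i, -1 <= mu i <= 1) ->
  forall u, in_conv S (fun i => m1 N (mu i)) u -> forall k, `|u k 0| <= 1.
Proof.
move=> hmu u [w [hw [hs ->]]] k.
rewrite summxE -hs.
apply: le_trans (ler_norm_sum _ _ _) _.
apply: ler_sum => i Si.
rewrite !mxE normrM (ger0_norm (hw _ Si)) -[X in _ <= X]mulr1 ler_wpM2l ?hw //.
rewrite normrX exprn_ile1 // ler_norml; exact: hmu.
Qed.

Lemma scale_out (R : realFieldType) (n N p : nat) (S : pred 'I_n) (mu : 'I_n -> R)
  (A : 'M[R]_(p, N)) (b : 'cV[R]_p) :
  (forall i, -1 <= mu i <= 1) ->
  (forall i, 0 <= b i 0) ->
  (forall u, in_conv S (fun i => m1 N (mu i)) u <-> mx_le A u b) ->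
  forall (l : R) (u : 'cV[R]_N), 0 <= l -> (forall i, (A *m u) i 0 <= l * b i 0) ->
  exists v : 'I_n -> R, [/\ forall i, S i -> 0 <= v i, \sum_(k | S k) v k = l &
     u = \sum_(k | S k) v k *: m1 N (mu k)].
Proof.
move=> hmu hb H l u hl hu.
have [l0|lnz] := eqVneq l 0.
  subst l.
  have hc : forall t, 0 <= t -> in_conv S (fun i => m1 N (mu i)) (t *: u).
    move=> t ht; apply/H => i; rewrite -scalemxAr mxE.
    apply: le_trans (hb i); rewrite mulr_ge0_le0 //.
    by have := hu i; rewrite mul0r.
  have u0 : u = 0.
    apply/matrixP => k j; rewrite (ord1 j) mxE.
    apply/eqP; apply/negP => /negP unz.
    have np : 0 < `|u k 0| by rewrite normr_gt0.
    have t0 : 0 < 2%:R / `|u k 0| :> R by rewrite divr_gt0 // ltr0n.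
    have := @conv_bound R n N S mu hmu _ (hc _ (ltW t0)) k.
    rewrite !mxE normrM (ger0_norm (ltW t0)) divfK ?gt_eqF //.
    by move=> h; lra.
  exists (fun => 0); split => //; first by rewrite big1.
  by rewrite u0 big1 // => k _; rewrite scale0r.
have lp : 0 < l by rewrite lt_def lnz hl.
have hin : in_conv S (fun i => m1 N (mu i)) (l^-1 *: u).
  apply/H => i; rewrite -scalemxAr mxE ler_pdivrMl //.
have [w [hw [hs hx]]] := hin.
exists (fun k => l * w k); split.
- by move=> k Sk; rewrite mulr_ge0 ?hw.
- by rewrite -mulr_sumr hs mulr1.
- rewrite -[u](scalerKV lnz) hx scaler_sumr; apply: eq_bigr => k _; by rewrite scalerA.
Qed.
Lemma sum_col_mxl (R : realFieldType) (I : finType) (P : pred I) (m1 m2 : nat)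
  (a : I -> R) (x : I -> 'cV[R]_m1) :
  \sum_(i | P i) a i *: col_mx (x i) (0 : 'cV[R]_m2) = col_mx (\sum_(i | P i) a i *: x i) 0.
Proof.
elim/big_rec2: _ => [|i y1 y2 _ ->]; first by rewrite col_mx0.
by rewrite scale_col_mx add_col_mx scaler0 addr0.
Qed.

Lemma sum_col_mxr (R : realFieldType) (I : finType) (P : pred I) (m1 m2 : nat)
  (a : I -> R) (x : I -> 'cV[R]_m2) :
  \sum_(i | P i) a i *: col_mx (0 : 'cV[R]_m1) (x i) = col_mx 0 (\sum_(i | P i) a i *: x i).
Proof.
elim/big_rec2: _ => [|i y1 y2 _ ->]; first by rewrite col_mx0.
by rewrite scale_col_mx add_col_mx scaler0 addr0.
Qed.

Lemma scale_in (R : realFieldType) (n N p : nat) (S : pred 'I_n) (f : 'I_n -> 'cV[R]_N)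
  (A : 'M[R]_(p, N)) (b : 'cV[R]_p) :
  (forall u, in_conv S f u <-> mx_le A u b) ->
  forall v : 'I_n -> R, (forall i, S i -> 0 <= v i) ->
  forall i, (A *m \sum_(k | S k) v k *: f k) i 0 <= (\sum_(k | S k) v k) * b i 0.
Proof.
move=> H v hv i.
have hl : 0 <= \sum_(k | S k) v k by apply: sumr_ge0.
have [l0|lpos] := eqVneq (\sum_(k | S k) v k) 0.
  rewrite l0 mul0r big1 ?mulmx0 ?mxE // => k Sk.
  by rewrite (psumr_eq0P hv l0 Sk) scale0r.
have lp : 0 < \sum_(k | S k) v k by rewrite lt_def lpos hl.

have : in_conv S f ((\sum_(k | S k) v k)^-1 *: \sum_(k | S k) v k *: f k).
  exists (fun k0 => (\sum_(k | S k) v k)^-1 * v k0); split; [|split].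
  - by move=> k Sk; rewrite mulr_ge0 ?invr_ge0 ?hv.
  - by rewrite -mulr_sumr mulVf.
  - by rewrite scaler_sumr; apply: eq_bigr => k _; rewrite scalerA.
move/H/(_ i); rewrite -scalemxAr mxE ler_pdivrMl //.
Qed.

Theorem mainTheorem6 (R : realFieldType) (n N p q : nat) (mu : 'I_n -> R)
  (Ap : 'M[R]_(p, N)) (bp : 'cV[R]_p) (Am : 'M[R]_(q, N)) (bm : 'cV[R]_q) :
  injective mu ->
  (forall i, -1 <= mu i <= 1) ->
  (exists i, mu i = 0) ->
  (forall u : 'cV[R]_N,
     in_conv (fun i => 0 <= mu i) (fun i => m1 N (mu i)) u <-> mx_le Ap u bp) ->
  (forall u : 'cV[R]_N,
     in_conv (fun i => mu i <= 0) (fun i => m1 N (mu i)) u <-> mx_le Am u bm) ->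
  (forall i, 0 <= bp i 0) ->
  (forall j, 0 <= bm j 0) ->
  forall up um : 'cV[R]_N,
    Rmix_closed mu (col_mx up um) <->
    [/\ mx_le Ap up bp,
        mx_le Am um bm &
        forall (i : 'I_p) (j : 'I_q), bp i 0 != 0 -> bm j 0 != 0 ->
          (bp i 0)^-1 * (Ap *m up) i 0 + (bm j 0)^-1 * (Am *m um) j 0 <= 1].
Proof.
move=> _ hmu [i0 hi0] Hp Hm hbp hbm up um; split.
- move=> [w [hw [hs hu]]].
  move: hs hu; rewrite !big_sumType /= sum_col_mxl sum_col_mxr add_col_mx addr0 add0r.
  move=> hs /eq_col_mx [-> ->].
  set l1 := \sum_(i | 0 <= mu i) w (inl i).
  set l2 := \sum_(i | mu i <= 0) w (inr i).
  have h1 := @scale_in _ _ _ _ _ _ _ _ Hp (fun i => w (inl i)) (fun i Si => hw (inl i) Si).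
  have h2 := @scale_in _ _ _ _ _ _ _ _ Hm (fun i => w (inr i)) (fun i Si => hw (inr i) Si).
  rewrite -/l1 in h1; rewrite -/l2 in h2.
  have l1p : 0 <= l1 by apply: sumr_ge0 => i Si; exact: (hw (inl i)).
  have l2p : 0 <= l2 by apply: sumr_ge0 => i Si; exact: (hw (inr i)).
  split.
  + move=> i; apply: le_trans (h1 i) _.
    by rewrite -[X in _ <= X]mul1r ler_wpM2r // -hs lerDl.
  + move=> j; apply: le_trans (h2 j) _.
    by rewrite -[X in _ <= X]mul1r ler_wpM2r // -hs lerDr.
  + move=> i j bi bj.
    have bip : 0 < bp i 0 by rewrite lt_def bi hbp.
    have bjp : 0 < bm j 0 by rewrite lt_def bj hbm.
    rewrite -hs; apply: lerD; rewrite ler_pdivrMl // mulrC; [exact: h1|exact: h2].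
- move=> [hp hm hpm].
  pose al := \big[Order.max/0]_(i | bp i 0 != 0) ((bp i 0)^-1 * (Ap *m up) i 0).
  pose be := \big[Order.max/0]_(j | bm j 0 != 0) ((bm j 0)^-1 * (Am *m um) j 0).
  have al0 : 0 <= al by apply: bigmax_ge_id.
  have be0 : 0 <= be by apply: bigmax_ge_id.
  have hal : forall i, (Ap *m up) i 0 <= al * bp i 0.
    move=> i; have [b0|bnz] := eqVneq (bp i 0) 0; first by rewrite b0 mulr0 -b0 hp.
    have bip : 0 < bp i 0 by rewrite lt_def bnz hbp.
    rewrite mulrC -ler_pdivrMl //; exact: (le_bigmax_cond (P := fun k => bp k 0 != 0) _ _ bnz).
  have hbe : forall j, (Am *m um) j 0 <= be * bm j 0.
    move=> j; have [b0|bnz] := eqVneq (bm j 0) 0; first by rewrite b0 mulr0 -b0 hm.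
    have bjp : 0 < bm j 0 by rewrite lt_def bnz hbm.
    rewrite mulrC -ler_pdivrMl //; exact: (le_bigmax_cond (P := fun k => bm k 0 != 0) _ _ bnz).
  have tp : forall i, bp i 0 != 0 -> (bp i 0)^-1 * (Ap *m up) i 0 <= 1.
    move=> i bnz; have bip : 0 < bp i 0 by rewrite lt_def bnz hbp.
    by rewrite ler_pdivrMl // mulr1.
  have tm : forall j, bm j 0 != 0 -> (bm j 0)^-1 * (Am *m um) j 0 <= 1.
    move=> j bnz; have bjp : 0 < bm j 0 by rewrite lt_def bnz hbm.
    by rewrite ler_pdivrMl // mulr1.
  have be1 : be <= 1 by apply: bigmax_le => //; exact: tm.
  have hab : al <= 1 - be.
    apply: bigmax_le => [|i bi]; first by rewrite subr_ge0.
    rewrite lerBrDr addrC -lerBrDr.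
    apply: bigmax_le => [|j bj]; first by rewrite subr_ge0 tp.
    by rewrite lerBrDr addrC hpm.
  have [v [hv hvs hvu]] := @scale_out _ _ _ _ _ _ _ _ hmu hbp Hp _ _ al0 hal.
  have [v' [hv' hvs' hvu']] := @scale_out _ _ _ _ _ _ _ _ hmu hbm Hm _ _ be0 hbe.
  exists (fun k => match k with
                   | inl i => v i + (if i == i0 then 1 - al - be else 0)
                   | inr i => v' i end).
  have c0 : 0 <= 1 - al - be by rewrite subr_ge0 lerBrDr addrC -lerBrDr.
  have si0 : 0 <= mu i0 by rewrite hi0.
  have hite : forall c : R, \sum_(i | 0 <= mu i) (if i == i0 then c else 0) = c.
    by move=> c; rewrite (bigD1 i0) //= eqxx big1 ?addr0 // => i /andP [_ /negbTE ->].
  split; [|split].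
  + case=> [i|i] /= Si; last exact: hv'.
    by apply: addr_ge0; [exact: hv|case: eqP].
  + rewrite big_sumType /= big_split /= hvs hvs' hite; lra.
  + rewrite big_sumType /= sum_col_mxl sum_col_mxr add_col_mx addr0 add0r.
    congr col_mx; last by [].
    under eq_bigr do rewrite scalerDl.
    rewrite big_split /= -hvu.
    rewrite (bigD1 i0) //= eqxx big1 ?addr0.
      by rewrite /m1 hi0; apply/matrixP => k j; rewrite !mxE expr0n mulr0 addr0.
    by move=> i /andP [_ /negbTE ->]; rewrite scale0r.
Qed.
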